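(* Let $X,Y$ be compact metric spaces and let $\mathcal G\subset\mathrm{Homeo}(X)$, $\mathcal H\subset\mathrm{Homeo}(Y)$ be finitely generated pseudogroups strongly isomorphic via a homeomorphism $\varphi:X\to Y$; let $\mathcal G_1$ be a finite generating set of $\mathcal G$ and $\mathcal H_1=\{\varphi\circ g\circ\varphi^{-1}:g\in\mathcal G_1\}$. If a Borel probability measure $\mu$ on $X$ is $(\mathcal G,\mathcal G_1)$-expansive with some constant $\eta>0$, then there exists $\delta>0$ such that $\varphi_*\mu$ is $(\mathcal H,\mathcal H_1)$-expansive with constant $\delta$.
   Context: $\mathrm{Homeo}(X)$: homeomorphisms $g:D_g\to R_g$ between open subsets of $X$, composed on natural domains $D_{h\circ g}=g^{-1}(D_h)$. A pseudogroup is a subset of $\mathrm{Homeo}(X)$ containing $\mathrm{id}_X$, closed under composition, inversion, restriction to open subsets, and gluing along open covers of the domain; $\Gamma$ generates $\mathcal G$ if $\bigcup_{g\in\Gamma}(D_g\cup R_g)=X$ and $\mathcal G$ is exactly the set of $g\in\mathrm{Homeo}(X)$ locally equal near each point of $D_g$ to a finite composition of elements of $\Gamma$ and their inverses. $\mathcal G,\mathcal H$ are strongly isomorphic via $\varphi$ if for every $f\in\mathrm{Homeo}(X)$: $\varphi\circ f\circ\varphi^{-1}\in\mathcal H$ iff $f\in\mathcal G$. For a pseudogroup with finite generating set $\Gamma$: $\Gamma_n=\{g_1\circ\cdots\circ g_n:g_i\in\Gamma\}$, $\Gamma_n^x=\{g\in\Gamma_n:x\in D_g\}$, $\Phi_\delta(x)=\{y: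 d(g(x),g(y))\le\delta\ \forall n\in\mathbb N,\ \forall g\in\Gamma_n^x\cap\Gamma_n^y\}$. A Borel probability measure $\mu$ is expansive with constant $\delta$ for $(\mathcal G,\Gamma)$ if $\mu(\Phi_\delta(x))=0$ for every point $x$. $\varphi_*\mu=\mu\circ\varphi^{-1}$. *)

(* Defs.v *)
From HB Require Import structures.
From mathcomp Require Import all_boot all_order all_algebra.
From mathcomp Require Import all_classical all_reals all_analysis.
From Stdlib Require List.
Set Implicit Arguments. Unset Strict Implicit. Unset Printing Implicit Defensive.
Import Order.TTheory GRing.Theory Num.Theory.
Local Open Scope classical_set_scope.
Local Open Scope ring_scope.

Definition borel (T : ptopologicalType) := g_sigma_algebraType (@open T).

(* metric spaces with a distinguished point (needed to build the Borel
   measurable type; harmless since a probability measure forces X <> set0) *)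
#[short(type="pmetricType")]
HB.structure Definition PointedMetric (K : numDomainType) :=
  { M of Metric K M & Pointed M }.

(* An element of Homeo(X): homeomorphism fn : dom -> ran between open sets,
   with inverse inv.  Values of fn outside dom (and inv outside ran) are
   irrelevant: every notion below only looks at them on dom (resp. ran). *)
Record phomeo (X : topologicalType) := PHomeo {
  dom : set X ;
  ran : set X ;
  fn : X -> X ;
  inv : X -> X ;
  dom_open : open dom ;
  ran_open : open ran ;
  fn_maps : forall x, dom x -> ran (fn x) ;
  inv_maps : forall y, ran y -> dom (inv y) ;
  inv_fn : forall x, dom x -> inv (fn x) = x ;
  fn_inv : forall y, ran y -> fn (inv y) = y ;
  fn_cont : {within dom, continuous fn} ;
  inv_cont : {within ran, continuous inv}
}.

Section PG.
Variable X : topologicalType.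
Implicit Types (g h k : phomeo X) (G : phomeo X -> Prop).

Definition is_id k := (forall x, dom k x) /\ (forall x, fn k x = x).
Definition is_comp h g k :=
  (forall x, dom k x <-> (dom g x /\ dom h (fn g x))) /\
  (forall x, dom k x -> fn k x = fn h (fn g x)).
Definition is_inv g k :=
  (forall x, dom k x <-> ran g x) /\ (forall x, dom k x -> fn k x = inv g x).
Definition is_restr g k :=
  (forall x, dom k x -> dom g x) /\ (forall x, dom k x -> fn k x = fn g x).

Definition pseudogroup G :=
  (forall k, is_id k -> G k) /\
  (forall g h k, G g -> G h -> is_comp h g k -> G k) /\
  (forall g k, G g -> is_inv g k -> G k) /\
  (forall g k, G g -> is_restr g k -> G k) /\
  (forall k, (forall x, dom k x -> exists k', G k' /\ is_restr k k' /\ dom k' x)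
     -> G k).

(* words in the generators and their inverses: (g, true) stands for g,
   (g, false) for g^-1; the word [a1; ...; an] denotes a1 o ... o an
   on its natural domain. *)
Definition letter_dom (a : phomeo X * bool) := if a.2 then dom a.1 else ran a.1.
Definition letter_fn (a : phomeo X * bool) := if a.2 then fn a.1 else inv a.1.

Fixpoint wfn (w : seq (phomeo X * bool)) : X -> X :=
  match w with
  | [::] => id
  | a :: w' => fun x => letter_fn a (wfn w' x)
  end.
Fixpoint wdom (w : seq (phomeo X * bool)) : set X :=
  match w with
  | [::] => setT
  | a :: w' => fun x => wdom w' x /\ letter_dom a (wfn w' x)
  end.

Definition generates G (Gam : seq (phomeo X)) :=
  (forall x, exists2 g, List.In g Gam & (dom g x \/ ran g x)) /\
  (forall g, G g <->
     forall x, dom g x ->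
       exists w : seq (phomeo X * bool),
         List.Forall (fun a => List.In a.1 Gam) w /\
         exists U : set X, open U /\ U x /\ U `<=` dom g /\ U `<=` wdom w /\
           forall y, U y -> fn g y = wfn w y).

Definition finitely_generated G := exists Gam, generates G Gam.

Definition pos_word (w : seq (phomeo X)) := [seq (g, true) | g <- w].
Definition Gamma_n (Gam : seq (phomeo X)) (n : nat) (w : seq (phomeo X)) :=
  size w = n /\ List.Forall (fun g => List.In g Gam) w.
End PG.

Section Conj.
Variables (X Y : topologicalType) (phi : X -> Y) (psi : Y -> X).
(* h = phi o f o phi^-1  (psi is the inverse of phi) *)
Definition is_conj (f : phomeo X) (h : phomeo Y) :=
  (forall y, dom h y <-> dom f (psi y)) /\
  (forall y, dom h y -> fn h y = phi (fn f (psi y))).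

Definition strongly_isomorphic (G : phomeo X -> Prop) (H : phomeo Y -> Prop) :=
  forall f h, is_conj f h -> (H h <-> G f).
End Conj.

Section Exp.
Variables (R : realType) (X : metricType R).

Definition Phi (Gam : seq (phomeo X)) (delta : R) (x : X) : set X :=
  [set y | forall (n : nat) (w : seq (phomeo X)), Gamma_n Gam n w ->
     wdom (pos_word w) x -> wdom (pos_word w) y ->
     mdist (wfn (pos_word w) x) (wfn (pos_word w) y) <= delta].

(* expansive with constant delta for (G, Gam); depends only on Gam *)
Definition expansive (Gam : seq (phomeo X)) (mu : set X -> \bar R) (delta : R) :=
  forall x, mu (Phi Gam delta x) = 0%E.
End Exp.

(* Main.v *)
Require Import Defs.
From HB Require Import structures.
From mathcomp Require Import all_boot all_order all_algebra.
From mathcomp Require Import all_classical all_reals all_analysis.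
From mathcomp Require Import lra.
From Stdlib Require List.
Import Order.TTheory GRing.Theory Num.Theory.
Local Open Scope classical_set_scope.
Local Open Scope ring_scope.

Section Helpers.
Variable R : realType.

Lemma mdist_tri {X : metricType R} (x y z : X) :
  mdist x z <= mdist x y + mdist y z.
Proof.
apply/ler_addgt0Pr => e e0.
have h1 : ball x (mdist x y + e/2) y by rewrite ballEmdist /= ltrDl divr_gt0.
have h2 : ball y (mdist y z + e/2) z by rewrite ballEmdist /= ltrDl divr_gt0.
have := ball_triangle h1 h2; rewrite ballEmdist /= => /ltW.
have -> : mdist x y + e / 2 + (mdist y z + e / 2) = mdist x y + mdist y z + e.
  lra.
by [].
Qed.

Lemma closed_mdist_le {X : metricType R} (a : X) (d : R) :
  closed [set b | mdist a b <= d].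
Proof.
rewrite -[X in closed X]setCK; apply: open_closedC.
rewrite openE => z /= hz.
have dz : d < mdist a z by rewrite ltNge; apply/negP.
have e0 : 0 < mdist a z - d by rewrite subr_gt0.
rewrite /interior /=. have := nbhsx_ballx z _ e0; apply: filterS => y; rewrite ballEmdist /= => hy ay.
have := mdist_tri a y z; rewrite metric_sym in hy.
lra.
Qed.


Lemma closed_inter {T : topologicalType} {A B : Type} (P1 P2 : A -> B -> Prop)
  (D : A -> B -> set T) (f : A -> B -> T -> T) (C : A -> B -> set T) :
  (forall n w, open (D n w)) ->
  (forall n w z, D n w z -> {for z, continuous (f n w)}) ->
  (forall n w, closed (C n w)) ->
  closed [set y | forall n w, P1 n w -> P2 n w -> D n w y -> C n w (f n w y)].
Proof.
move=> Do fc Cc.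
rewrite -[X in closed X]setCK; apply: open_closedC.
rewrite openE => z /= hz; rewrite /interior.
have [n /existsNP [w /not_implyP [p1 /not_implyP [p2 /not_implyP [dz nc]]]]] :
  exists n, ~ forall w, P1 n w -> P2 n w -> D n w z -> C n w (f n w z).
  by apply/existsNP => h; apply: hz => n w; apply: h.
have h1 : nbhs z (D n w) by move: (Do n w); rewrite openE => /(_ z dz).
have h2 : nbhs z (f n w @^-1` (~` C n w)).
  apply: (fc n w z dz).
  by move: (closed_openC (Cc n w)); rewrite openE => /(_ _ nc).
apply: filterS (filterI h1 h2) => y [dy ncy] hy.
by apply: ncy; apply: hy.
Qed.

Lemma word_open {X : topologicalType} (w : seq (phomeo X)) :
  open (wdom (pos_word w)) /\
  forall z, wdom (pos_word w) z -> {for z, continuous (wfn (pos_word w))}.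
Proof.
elim: w => [|g w [Ho Hc]] /=.
  split; first exact: openT.
  by move=> z _; exact: cvg_id.
have Hc' : forall z, wdom (pos_word w) z -> dom g (wfn (pos_word w) z) ->
    {for z, continuous (fun x => fn g (wfn (pos_word w) x))}.
  move=> z dz dg.
  apply: (@continuous_comp _ _ _ (wfn (pos_word w)) (fn g)); first exact: Hc.
  have := @fn_cont _ g; rewrite continuous_open_subspace; last exact: (@dom_open _ g).
  by apply; rewrite inE.
split; last by move=> z [dz dg]; exact: Hc'.
rewrite openE => z [dz dg]; rewrite /interior.
have h1 : nbhs z (wdom (pos_word w)) by move: Ho; rewrite openE => /(_ z dz).
have h2 : nbhs z (wfn (pos_word w) @^-1` dom g).
  apply: (Hc z dz).
  by move: (@dom_open _ g); rewrite openE => /(_ _ dg).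
exact: filterI h1 h2.
Qed.


Lemma word_conj {X Y : topologicalType} (phi : X -> Y) (psi : Y -> X)
  (psiK : cancel phi psi) (phiK : cancel psi phi) (w : seq (phomeo X)) (w' : seq (phomeo Y)) :
  List.Forall2 (is_conj phi psi) w w' ->
  forall y, (wdom (pos_word w') y <-> wdom (pos_word w) (psi y)) /\
    (wdom (pos_word w') y -> wfn (pos_word w') y = phi (wfn (pos_word w) (psi y))).
Proof.
elim => [|g h w1 w1' [Hd Hf] _ IH] y; rewrite /= /letter_dom /letter_fn /=.
  by split => // _; rewrite phiK.
have [E1 E2] := IH y.
split.
  split.
    move=> [d1 d2]; have d1' := (E1.1 d1); split => //.
    by move: d2; rewrite E2 // => /Hd; rewrite psiK.
  move=> [d1 d2]; have d1' := (E1.2 d1); split => //.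
  by apply/Hd; rewrite E2 // psiK.
by move=> [d1 d2]; rewrite Hf // E2 // psiK.
Qed.

Lemma lift_words {A B : Type} (Rl : A -> B -> Prop) (l1 : seq A) (l2 : seq B) :
  List.Forall2 Rl l1 l2 ->
  forall w, List.Forall (fun g => List.In g l1) w ->
  exists w', List.Forall (fun h => List.In h l2) w' /\ List.Forall2 Rl w w'.
Proof.
move=> F2.
have inl : forall g, List.In g l1 -> exists h, List.In h l2 /\ Rl g h.
  elim: F2 => [|a b l1' l2' rab _ IH] g //= [<-|/IH [h [ih rh]]].
    by exists b; split => //; left.
  by exists h; split => //; right.
elim => [|g w IH] Fw; first by exists [::]; split; constructor.
inversion Fw as [|g0 w0 ig fw]; subst.
have [h [ih rh]] := inl g ig.
have [w' [fw' f2]] := IH fw.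
by exists (h :: w'); split; constructor.
Qed.

Lemma size_F2 {A B : Type} (Rl : A -> B -> Prop) (l1 : seq A) (l2 : seq B) :
  List.Forall2 Rl l1 l2 -> size l1 = size l2.
Proof. by elim => //= a b l l' _ _ ->. Qed.


Lemma unif_cont {Y X : metricType R} (psi : Y -> X) :
  compact [set: Y] -> continuous psi -> forall eta, 0 < eta ->
  exists2 d, 0 < d & forall u v, mdist u v <= d -> mdist (psi u) (psi v) <= eta.
Proof.
move=> /compact_near_coveringP cov pc eta eta0.
have H : \forall d \near (0:R)^'+, [set: Y] `<=`
  (fun u => forall v, mdist u v <= d -> mdist (psi u) (psi v) <= eta).
  apply: cov => u _.
  have e2 : 0 < eta / 2 by rewrite divr_gt0.
  have Hn : \forall t \near u, mdist (psi u) (psi t) < eta / 2.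
    by apply: (metricType_numDomainType.cvgr_dist_lt (pc u)).
  have [r r0 Hr] := (metricType_numDomainType.nbhs_mdistP _ _).1 Hn.
  have r2 : 0 < r / 2 by rewrite divr_gt0.
  exists ([set t | mdist u t < r / 2], [set d | d < r / 2]).
    split => /=.
      by have := nbhsx_ballx u _ r2; rewrite ballEmdist.
    exact: nbhs_right_lt.
  move=> [u' d] /= [uu' dd] v u'v.
  have h1 : mdist (psi u) (psi u') < eta / 2.
    by move: (Hr u'); rewrite /=; apply; lra.
  have h2 : mdist (psi u) (psi v) < eta / 2.
    move: (Hr v); rewrite /=; apply.
    have := mdist_tri u u' v; lra.
  have := mdist_tri (psi u') (psi u) (psi v); rewrite metric_sym in h1; lra.
  have [d [Hd d0]] := filter_ex (filterI H (nbhs_right_gt 0)).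
  by exists d => // u v; apply: Hd.
Qed.

End Helpers.

Theorem mainTheorem13 (R : realType) (X Y : pmetricType R)
  (hX : compact [set: X]) (hY : compact [set: Y])
  (phi : X -> Y) (psi : Y -> X)
  (phi_cont : continuous phi) (psi_cont : continuous psi)
  (psiK : cancel phi psi) (phiK : cancel psi phi)
  (G : phomeo X -> Prop) (H : phomeo Y -> Prop)
  (pgG : pseudogroup G) (pgH : pseudogroup H)
  (fgG : finitely_generated G) (fgH : finitely_generated H)
  (iso : strongly_isomorphic phi psi G H)
  (G1 : seq (phomeo X)) (genG1 : generates G G1)
  (H1 : seq (phomeo Y)) (defH1 : List.Forall2 (is_conj phi psi) G1 H1)
  (mu : probability (borel X) R) (eta : R) (eta_gt0 : 0 < eta)
  (mu_exp : expansive G1 mu eta) :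
  exists2 delta : R, 0 < delta &
    expansive H1 (pushforward mu (phi : borel X -> borel Y)) delta.
Proof.
have [d d0 Hd] := @unif_cont R Y X psi hY psi_cont eta eta_gt0.
exists d => // y.
rewrite /pushforward.
have sub : phi @^-1` Phi H1 d y `<=` Phi G1 eta (psi y).
  move=> x' Hx' n w [sw Fw] dx dx'.
  have [w' [Fw' F2]] := @lift_words _ _ _ _ _ defH1 w Fw.
  have Cj := @word_conj _ _ phi psi psiK phiK _ _ F2.
  have dy : wdom (pos_word w') y by apply/(Cj y).1.
  have dpx : wdom (pos_word w') (phi x') by apply/(Cj (phi x')).1; rewrite psiK.
  have := Hx' n w' (conj (etrans (esym (@size_F2 _ _ _ _ _ F2)) sw) Fw') dy dpx.
  by rewrite (Cj y).2 // (Cj (phi x')).2 // psiK => /Hd; rewrite !psiK.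
have clPhi : forall (Z : metricType R) (Gam : seq (phomeo Z)) (e : R) (z : Z),
    closed (Phi Gam e z).
  move=> Z Gam e z.
  apply: (@closed_inter _ nat (seq (phomeo Z)) (fun n w => Gamma_n Gam n w)
    (fun n w => wdom (pos_word w) z) (fun n w => wdom (pos_word w))
    (fun n w => wfn (pos_word w))
    (fun n w => [set b | mdist (wfn (pos_word w) z) b <= e])).
  - by move=> n w; exact: (word_open w).1.
  - by move=> n w; exact: (word_open w).2.
  - by move=> n w; exact: closed_mdist_le.
have clY : closed (phi @^-1` Phi H1 d y).
  rewrite -[Phi H1 d y]setCK -preimage_setC; apply: open_closedC.
  by apply: (continuousP _).1 phi_cont _ (closed_openC (clPhi _ _ _ _)).
have mX : forall A : set X, closed A -> measurable (A : set (borel X)).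
  move=> A cA; rewrite -[A]setCK; apply: measurableC; apply: sub_sigma_algebra.
  exact: closed_openC.
have := le_measure mu (mem_set (mX _ clY)) (mem_set (mX _ (clPhi _ _ _ _))) sub.
move=> h; have e0 := mu_exp (psi y).
apply/eqP; rewrite eq_le measure_ge0 andbT; apply: le_trans h _.
rewrite le_eqVlt; apply/orP; left; apply/eqP; exact: e0.
Qed.
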